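(* Let $M := \langle X \mid R\rangle$ and let $Y := \{x\in X \mid \exists\, a,b,c\in\langle X\rangle \text{ such that } (axb,c)\in R \text{ or } (c,axb)\in R\}$. If $M$ has accepted elasticity and $X \neq Y$, then $M$ is fully elastic.
   Context: For a set $X$, $\langle X\rangle$ is the free monoid on $X$ (identity $1$); $M=\langle X\mid R\rangle$ is the monoid presented by generators $X$ and relations $R\subseteq\langle X\rangle\times\langle X\rangle$. $|a|$ is word length; $a=_M b$ means equal images in $M$. $\mathsf{L}_M(a) := \{|b| : b\in\langle X\rangle,\ b=_M a\}$, $\mathcal{L}(M):=\{\mathsf{L}_M(a): a\in\langle X\rangle\}$. For $L\subseteq\mathbb{N}$, $\rho(L) := \sup(L\cap\mathbb{N}^+)/\min(L\cap\mathbb{N}^+)\in\mathbb{Q}^+\cup\{\infty\}$ if $L\cap\mathbb{N}^+\neq\emptyset$, and $\rho(L):=0$ otherwise. $\rho(M) := \sup\{\rho(L) : L\in\mathcal{L}(M)\}$. $M$ has accepted elasticity if $\rho(M) = \rho(L) < \infty$ for some $L\in\mathcal{L}(M)$. $M$ is fully elastic if for every $q\in\mathbb{Q}$ with $1<q<\rho(M)$ there is $L\in\mathcal{L}(M)$ with $\rho(L) = q$. *)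

(* Defs.v *)
From HB Require Import structures.
From mathcomp Require Import all_boot all_order all_algebra.
From mathcomp Require Import all_classical all_reals.
From mathcomp Require Import ereal Rstruct.
Set Implicit Arguments. Unset Strict Implicit. Unset Printing Implicit Defensive.
Import Order.TTheory GRing.Theory Num.Theory.
Local Open Scope classical_set_scope.
Local Open Scope ring_scope.
Local Open Scope ereal_scope.

(* Words over X are elements of seq X (the free monoid <X>, identity [::]).
   A presentation is given by a set of relations R on words. *)

(* The congruence on <X> generated by R: a =_M b with M = <X | R>. *)
Inductive Meq (X : Type) (R : set (seq X * seq X)) : seq X -> seq X -> Prop :=
| Meq_base u v : R (u, v) -> Meq R u v
| Meq_refl u : Meq R u u
| Meq_sym u v : Meq R u v -> Meq R v u
| Meq_trans u v w : Meq R u v -> Meq R v w -> Meq R u w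
| Meq_cat u u' v v' : Meq R u u' -> Meq R v v' -> Meq R (u ++ v) (u' ++ v').

Definition lenset (X : Type) (R : set (seq X * seq X)) (a : seq X) : set nat :=
  [set size b | b in [set b | Meq R b a]].

Definition lensets (X : Type) (R : set (seq X * seq X)) : set (set nat) :=
  [set lenset R a | a in [set: seq X]].

Definition rho (L : set nat) : \bar Rdefinitions.R :=
  let S := [set (n%:R)%:E | n in [set n | L n /\ (0 < n)%N]] in
  if asbool (exists n, L n /\ (0 < n)%N)
  then ereal_sup S * ((fine (ereal_inf S))^-1)%:E
  else 0.

Definition rhoM (X : Type) (R : set (seq X * seq X)) : \bar Rdefinitions.R :=
  ereal_sup [set rho L | L in lensets R].

Definition accepted_elasticity (X : Type) (R : set (seq X * seq X)) : Prop :=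
  exists2 L, lensets R L & rhoM R = rho L /\ rho L < +oo.

Definition fully_elastic (X : Type) (R : set (seq X * seq X)) : Prop :=
  forall q : rat, (1 < q)%R -> ((ratr q)%:E < rhoM R) ->
    exists2 L, lensets R L & rho L = (ratr q)%:E.

Definition relgens (X : Type) (R : set (seq X * seq X)) : set X :=
  [set x | exists a b c : seq X,
     R (a ++ x :: b, c) \/ R (c, a ++ x :: b)].

(* Main.v *)
Require Import Defs.
From mathcomp Require Import all_boot all_order all_algebra.
From mathcomp Require Import all_classical all_reals.
From mathcomp Require Import ereal Rstruct zify.
Set Implicit Arguments. Unset Strict Implicit. Unset Printing Implicit Defensive.
Import Order.TTheory GRing.Theory Num.Theory.
Local Open Scope classical_set_scope.
Notation RR := Rdefinitions.R.

Section Words.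
Variables (X : Type) (R : set (seq X * seq X)) (x : X).

Definition isx (y : X) : bool := `[< y = x >].
Definition del (w : seq X) := seq.filter (predC isx) w.

Lemma has_isx (w : seq X) : has isx w -> exists a b, w = a ++ x :: b.
Proof.
elim: w => //= y w IH /orP[/asboolP -> | /IH [a [b ->]]].
  by exists [::], w.
by exists (y :: a), b.
Qed.

Lemma rel_nox : ~ relgens R x -> forall u v, R (u, v) ->
  ~~ has isx u /\ ~~ has isx v.
Proof.
move=> hx u v huv; split; apply/negP => /has_isx [a [b e]]; apply: hx;
  exists a, b; [exists v; left| exists u; right]; by rewrite -e.
Qed.

Lemma del_nox w : ~~ has isx w -> del w = w.
Proof. by move=> h; apply/all_filterP; rewrite all_predC. Qed.

Lemma count_nox w : ~~ has isx w -> count isx w = 0%N.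
Proof. by move=> h; apply/eqP; rewrite eqn0Ngt -has_count. Qed.

Lemma Meq_inv : ~ relgens R x -> forall u v, Meq R u v ->
  Meq R (del u) (del v) /\ count isx u = count isx v.
Proof.
move=> hx u v; elim => {u v}.
- move=> u v huv; have [hu hv] := rel_nox hx huv.
  by rewrite !del_nox // !count_nox //; split => //; apply: Meq_base.
- by move=> u; split => //; apply: Meq_refl.
- by move=> u v _ [h1 h2]; split; [apply: Meq_sym|].
- by move=> u v w _ [h1 h2] _ [h3 h4]; split; [apply: Meq_trans h3| rewrite h2].
- move=> u u' v v' _ [h1 h2] _ [h3 h4]; rewrite /del !filter_cat !count_cat h2 h4.
  by split => //; apply: Meq_cat.
Qed.

Lemma size_del w : size w = (size (del w) + count isx w)%N.
Proof. by rewrite /del size_filter addnC count_predC. Qed.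

Fixpoint pw (k : nat) (w : seq X) := if k is k'.+1 then w ++ pw k' w else [::].

Lemma size_pw k w : size (pw k w) = (k * size w)%N.
Proof. by elim: k => //= k IH; rewrite size_cat IH mulSn. Qed.

Lemma Meq_pw k u v : Meq R u v -> Meq R (pw k u) (pw k v).
Proof. by move=> h; elim: k => [|k IH] /=; [apply: Meq_refl | apply: Meq_cat]. Qed.

Lemma pw_nox k w : ~~ has isx w -> ~~ has isx (pw k w).
Proof. by move=> h; elim: k => //= k IH; rewrite has_cat negb_or h. Qed.

Lemma del_nox' w : ~~ has isx (del w).
Proof. by rewrite -all_predC; apply: filter_all. Qed.

Lemma lensetP w n : lenset R w n <-> exists b, Meq R b w /\ size b = n.
Proof. by split => [[b hb <-]|[b [hb <-]]]; [exists b | exists b]. Qed.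

Lemma lenset_del : ~ relgens R x -> forall a n, lenset R a n ->
  lenset R (del a) (n - count isx a)%N /\ (count isx a <= n)%N.
Proof.
move=> hx a n /lensetP [b [hb <-]]; have [h1 h2] := Meq_inv hx hb.
rewrite size_del -h2 addnK leq_addl; split => //; apply/lensetP; by exists (del b).
Qed.

Lemma lenset_shift : ~ relgens R x -> forall w k l, ~~ has isx w ->
  lenset R (w ++ nseq k x) l <-> exists2 l', lenset R w l' & l = (l' + k)%N.
Proof.
move=> hx w k l hw; split.
- move=> /lensetP [b [hb <-]]; have [h1 h2] := Meq_inv hx hb.
  have hd : del (w ++ nseq k x) = w.
    rewrite /del filter_cat -/(del w) (del_nox hw); rewrite -[RHS]cats0; congr (_ ++ _).
    have e : forall j, seq.filter (predC isx) (nseq j x) = [::].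
      by elim => //= j IH; rewrite /= IH; have -> : isx x by apply/asboolP.
    exact: e.
  have hc : count isx (w ++ nseq k x) = k.
    have hxx : isx x by apply/asboolP.
    rewrite count_cat count_nox // add0n count_nseq /= hxx.
    by rewrite mul1n.
  exists (size (del b)); first by apply/lensetP; exists (del b); rewrite -hd.
  by rewrite size_del h2 hc.
- move=> [_ /lensetP [b [hb <-]] ->]; apply/lensetP; exists (b ++ nseq k x).
  by rewrite size_cat size_nseq; split => //; apply: Meq_cat => //; apply: Meq_refl.
Qed.

End Words.
Section Rho.
Local Open Scope ereal_scope.


Lemma rho_inf_ge1 (L : set nat) :
  1%E <= ereal_inf [set ((n%:R : RR))%:E | n in [set n | L n /\ (0 < n)%N]].
Proof.
apply: le_ereal_inf_tmp => _ [n [_ hn] <-].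
by rewrite lee_fin ler1n.
Qed.

Lemma rho_eq (L : set nat) (s m : nat) : L s -> (0 < s)%N -> L m -> (0 < m)%N ->
  (forall n, L n -> (0 < n)%N -> (n <= s)%N /\ (m <= n)%N) ->
  rho L = ((s%:R / m%:R : RR))%:E.
Proof.
move=> Ls s0 Lm m0 h; rewrite /rho asboolT; last by exists s.
set S := [set _ | _ in _].
have -> : ereal_sup S = (s%:R : RR)%:E.
  apply/eqP; rewrite eq_le; apply/andP; split.
    by apply: ge_ereal_sup => _ [n [Ln n0] <-]; rewrite lee_fin ler_nat; case: (h n Ln n0).
  by apply: ereal_sup_ubound; exists s.
have -> : ereal_inf S = (m%:R : RR)%:E.
  apply/eqP; rewrite eq_le; apply/andP; split.
    by apply: ereal_inf_lbound; exists m.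
  by apply: le_ereal_inf_tmp => _ [n [Ln n0] <-]; rewrite lee_fin ler_nat; case: (h n Ln n0).
by [].
Qed.

Lemma rho_unb (L : set nat) s : L s -> (0 < s)%N ->
  (forall B, exists n, L n /\ (0 < n)%N /\ (B < n)%N) -> rho L = +oo.
Proof.
move=> Ls s0 h; rewrite /rho asboolT; last by exists s.
set S := [set _ | _ in _].
have hi : 1%E <= ereal_inf S by apply: rho_inf_ge1.
have hs : ereal_inf S <= (s%:R : RR)%:E by apply: ereal_inf_lbound; exists s.
have -> : ereal_sup S = +oo.
  case E: (ereal_sup S) => [r| |] //.
  - have [n [Ln [n0 hn]]] := h (Num.Def.archi_bound r).
    have : ((n%:R : RR))%:E <= ereal_sup S by apply: ereal_sup_ubound; exists n.
    rewrite E lee_fin => hle.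
    have := le_lt_trans (le_trans hle (ler_norm r)) (unstable.ltr_norm_bound r).
    by rewrite ltr_nat ltnNge (ltnW hn).
  - have : ((s%:R : RR))%:E <= ereal_sup S by apply: ereal_sup_ubound; exists s.
    by rewrite E.
apply: gt0_mulye; rewrite lte_fin invr_gt0.
move: hi hs; case: (ereal_inf S) => [r| |] //=.
by rewrite lee_fin => h1 _; apply: lt_le_trans h1.
Qed.

Lemma rho_fin (L : set nat) : rho L < +oo -> (exists s, L s /\ (0 < s)%N) ->
  exists M m, [/\ L M /\ (0 < M)%N, L m /\ (0 < m)%N,
   (forall n, L n -> (0 < n)%N -> (n <= M)%N /\ (m <= n)%N) &
   rho L = ((M%:R / m%:R : RR))%:E].
Proof.
move=> hfin [s [Ls s0]].
have [B hB] : exists B, forall n, L n -> (0 < n)%N -> (n <= B)%N.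
  apply: contrapT => hnot.
  have : rho L = +oo.
    apply: (rho_unb Ls s0) => B; apply: contrapT => hB; apply: hnot; exists B.
    move=> n Ln n0; rewrite leqNgt; apply/negP => hn; apply: hB; by exists n.
  by move=> e; move: hfin; rewrite e ltxx.
pose P := fun n => `[< L n /\ (0 < n)%N >].
have exP : exists n, P n by exists s; apply/asboolP.
have bP : forall n, P n -> (n <= B)%N by move=> n /asboolP [] /hB.
move: (ex_maxnP exP bP) => [M /asboolP [LM M0] hM].
move: (ex_minnP exP) => [m /asboolP [Lm m0] hm].
have hall : forall n, L n -> (0 < n)%N -> (n <= M)%N /\ (m <= n)%N.
  by move=> n Ln n0; split; [apply: hM | apply: hm]; apply/asboolP.
by exists M, m; split => //; apply: rho_eq.
Qed.

Lemma rho_le_rhoM (X : Type) (R : set (seq X * seq X)) w :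
  rho (lenset R w) <= rhoM R.
Proof. by apply: ereal_sup_ubound; exists (lenset R w) => //; exists w. Qed.
End Rho.
Section Arith.
Local Open Scope ring_scope.

Lemma natdiv_lt (a b c d : nat) : (0 < b)%N -> (0 < d)%N ->
  (a%:R / b%:R < c%:R / d%:R :> RR) -> (a * d < c * b)%N.
Proof.
move=> b0 d0; rewrite ltr_pdivrMr ?ltr0n // mulrAC ltr_pdivlMr ?ltr0n //.
by rewrite -!natrM ltr_nat.
Qed.

Lemma natdiv_le (a b c d : nat) : (0 < b)%N -> (0 < d)%N ->
  (a%:R / b%:R <= c%:R / d%:R :> RR) -> (a * d <= c * b)%N.
Proof.
move=> b0 d0; rewrite ler_pdivrMr ?ltr0n // mulrAC ler_pdivlMr ?ltr0n //.
by rewrite -!natrM ler_nat.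
Qed.

Lemma natdiv_eq (a b c d : nat) : (0 < b)%N -> (0 < d)%N ->
  (a * d = c * b)%N -> (a%:R / b%:R = c%:R / d%:R :> RR).
Proof.
move=> b0 d0 h; apply/eqP; rewrite eqr_div ?pnatr_eq0 -?lt0n //.
by rewrite -!natrM h.
Qed.

Lemma ratr_nat (q : rat) : (0 < q) ->
  ratr q = ((`|numq q|%N)%:R / (`|denq q|%N)%:R :> RR) /\
  (0 < `|numq q|)%N /\ (0 < `|denq q|)%N.
Proof.
move=> q0; have n0 : 0 < numq q by rewrite numq_gt0.
have d0 := denq_gt0 q.
rewrite /ratr -{1}(gez0_abs (ltW n0)) -{1}(gez0_abs (ltW d0)).
by rewrite !pmulrn; split => //; split; rewrite absz_gt0 gt_eqF.
Qed.

Lemma test (p r M1 m1 : nat) : (p * m1 <= r * M1)%N -> (r < p)%N ->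
  (((p - r) * M1 + (r * M1 - p * m1)) * r = ((p - r) * m1 + (r * M1 - p * m1)) * p)%N.
Proof.
move=> h1 h2.
have [k ek] : exists k, p = (r + k)%N by exists (p - r)%N; lia.
subst p.
have [n e] : exists n, (r * M1 = (r + k) * m1 + n)%N.
  exists (r * M1 - (r+k) * m1)%N. by rewrite subnKC.

rewrite e.
have -> : (r + k - r = k)%N by lia.
have -> : ((r + k) * m1 + n - (r + k) * m1 = n)%N by lia.
have e2 : (k * (r * M1) = k * ((r + k) * m1 + n))%N by rewrite e.
nia.
Qed.
End Arith.

Lemma no_unit (X : Type) (R : set (seq X * seq X))
  (hfin' : forall w, (rho (lenset R w) < +oo)%E) (z : seq X) :
  Meq R z [::] -> z = [::].
Proof.
move=> hz0; case E: z => [|y z'] //; exfalso.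
have hposz : (0 < size z)%N by rewrite E.
have hL : forall k, lenset R [::] (k * size z)%N.
  move=> k; apply/lensetP; exists (pw k z); split; last by rewrite size_pw.
  have := Meq_pw k hz0; suff -> : pw k ([::] : seq X) = [::] by [].
  by elim: k => //= k ->.
have hL1 : (0 < 1 * size z)%N by rewrite mul1n.
have [M2 [m2 [[_ _] [_ _] h2 _]]] := rho_fin (hfin' [::]) (ex_intro _ _ (conj (hL 1%N) hL1)).
have := h2 _ (hL M2.+1) ltac:(by rewrite muln_gt0 hposz).
by case => /(leq_trans (leq_pmulr _ hposz)); rewrite ltnn.
Qed.

Theorem theorem4p5 (X : Type) (R : set (seq X * seq X)) :
  accepted_elasticity R -> [set: X] <> relgens R -> fully_elastic R.
Proof.
move=> [L [a _ <-] [hM hfin]] hY q q1 qlt.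
have [x hx] : exists x, ~ relgens R x.
  apply: contrapT => h; apply: hY; rewrite predeqE => y; split => // _.
  by apply: contrapT => hy; apply: h; exists y.
rewrite hM in qlt.
have q0 : (0 < q)%R by apply: lt_trans q1.
have [hq [p0 r0]] := ratr_nat q0.
set p := `|numq q|%N in hq p0.
set r := `|denq q|%N in hq r0.
have hrp : (r < p)%N.
  have : ((1%:R / 1%:R : RR) < ratr q)%R.
    by rewrite divr1 -(rmorph1 (@ratr RR)) ltr_rat.
  rewrite hq => h; have := natdiv_lt (isT : (0 < 1)%N) r0 h.
  by rewrite mul1n muln1.
have hpos : exists s, lenset R a s /\ (0 < s)%N.
  apply: contrapT => hn.
  have e : rho (lenset R a) = 0%E by rewrite /rho asboolF.
  move: qlt; rewrite e lte_fin => h.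
  have h2 : (0 < ratr q :> RR)%R by rewrite -(rmorph0 (@ratr RR)) ltr_rat.
  by have := lt_trans h h2; rewrite ltxx.
have [M0 [m0 [[LM0 M00] [Lm0 m00] h0 e0]]] := rho_fin hfin hpos.
move: qlt; rewrite e0 lte_fin hq => /natdiv_lt => /(_ r0 m00) hpm.
have hmM : (m0 < M0)%N by nia.
set c := count (isx x) a.
set a' := del x a.
have [LM0' cM0] := lenset_del hx LM0.
have [Lm0' cm0] := lenset_del hx Lm0.
have hfin' : forall w, (rho (lenset R w) < +oo)%E.
  by move=> w; apply: le_lt_trans (rho_le_rhoM R w) _; rewrite hM.
have hpos' : exists s, lenset R a' s /\ (0 < s)%N.
  by exists (M0 - c)%N; split => //; rewrite subn_gt0; apply: leq_trans hmM.
have [M1 [m1 [[LM1 M10] [Lm1 m10] h1 e1]]] := rho_fin (hfin' a') hpos'.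
have key1 : (M0 * m1 <= M1 * m0)%N.
  have [em|lm] := eqVneq m0 c.
    exfalso.
    move: Lm0'; rewrite -/c -em subnn => /lensetP [b [hb b0]].
    move: b0 => /size0nil eb; subst b.
    move: LM0' => /lensetP [z [hz sz]].
    have hz0 : Meq R z [::] by apply: Meq_trans hz (Meq_sym hb).
    have := no_unit hfin' hz0 => ez; move: sz; rewrite ez /= => /esym /eqP.
    by rewrite -/c subn_eq0 -em leqNgt hmM.
  have lm' : (c < m0)%N by rewrite ltn_neqAle eq_sym lm cm0.
  have hm1 : (m1 <= m0 - c)%N by case: (h1 _ Lm0' _) => //; rewrite subn_gt0.
  have hM1 : (M0 - c <= M1)%N by case: (h1 _ LM0' _) => //; rewrite subn_gt0; apply: leq_trans hmM.
  nia.
set k := (p - r)%N.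
have k0 : (0 < k)%N by rewrite subn_gt0.
set w := pw k a'.
have wnox : ~~ has (isx x) w by apply: pw_nox; apply: del_nox'.
have kM0 : (0 < k * M1)%N by rewrite muln_gt0 k0.
have LwM : lenset R w (k * M1)%N.
  move: LM1 => /lensetP [b [hb sb]]; apply/lensetP; exists (pw k b).
  by rewrite size_pw sb; split => //; apply: Meq_pw.
have Lwm : lenset R w (k * m1)%N.
  move: Lm1 => /lensetP [b [hb sb]]; apply/lensetP; exists (pw k b).
  by rewrite size_pw sb; split => //; apply: Meq_pw.
have [s [m [[Ls s0] [Lm m0'] hw ew]]] :=
  rho_fin (hfin' w) (ex_intro _ _ (conj LwM kM0)).
have hsm : (s * m0 <= M0 * m)%N.
  have := rho_le_rhoM R w; rewrite hM e0 ew lee_fin.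
  by move/(natdiv_le m0' m00).
have [hs1 _] := hw _ LwM ltac:(by rewrite muln_gt0 k0).
have [_ hm2] := hw _ Lwm ltac:(by rewrite muln_gt0 k0).
have em : m = (k * m1)%N.
  apply/eqP; rewrite eqn_leq; apply/andP; split.
    by case: (hw _ Lwm ltac:(by rewrite muln_gt0 k0)).
  rewrite -(leq_pmul2l M00); nia.
have es : s = (k * M1)%N.
  apply/eqP; rewrite eqn_leq hs1 andbT.
  rewrite -(leq_pmul2r m00); nia.
subst s m.
have hpm1 : (p * m1 <= r * M1)%N.
  rewrite -(leq_pmul2r m00); nia.
set n := (r * M1 - p * m1)%N.
exists (lenset R (w ++ nseq n x)); first by exists (w ++ nseq n x).
have Lsh : forall l, lenset R (w ++ nseq n x) l <-> exists2 l', lenset R w l' & l = (l' + n)%N.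
  by move=> l; apply: lenset_shift.
rewrite (@rho_eq _ (k * M1 + n)%N (k * m1 + n)%N).
- congr (_%:E); apply: natdiv_eq.
  + by rewrite addn_gt0 muln_gt0 k0 m10.
  + by [].
  + by rewrite [p * _]mulnC; apply: test.
- by apply/Lsh; exists (k * M1)%N.
- by rewrite addn_gt0 muln_gt0 k0 M10.
- by apply/Lsh; exists (k * m1)%N.
- by rewrite addn_gt0 muln_gt0 k0 m10.
- move=> l /Lsh [l' hl' ->] l0.
  have [|a1 a2] := hw _ hl'.
    rewrite lt0n; apply/negP => /eqP e; subst l'.
    move: hl' => /lensetP [b [hb /size0nil eb]]; subst b.
    move: LwM => /lensetP [z [hz sz]].
    have := no_unit hfin' (Meq_trans hz (Meq_sym hb)) => ez.
    by move: sz; rewrite ez /= => /esym /eqP; rewrite muln_eq0 (gtn_eqF k0) (gtn_eqF M10).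
  by rewrite !leq_add2r.
Qed.
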